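(* Let $01234$ be a convex pentagon inscribed in a circle of radius $R$, with vertices in cyclic order and area $A$. Let $$a_0=|23|,\quad a_1=|34|,\quad a_2=|40|,\quad a_3=|01|,\quad a_4=|12|,$$ and let $X=|14|$. Put $p=a_2a_3$, $P=a_0a_1a_4$, $Q=a_0^2+a_1^2+a_4^2$, and $S=(a_0a_1)^2+(a_0a_4)^2+(a_1a_4)^2$. Then $$(4AR-pX)^2=PX^3+SX^2+PQX+P^2.$$
   Context: $|ij|$ denotes the distance between vertices $i$ and $j$. *)

(* Defs.v *)
From HB Require Import structures.
From mathcomp Require Import all_boot all_order all_algebra.
Set Implicit Arguments. Unset Strict Implicit. Unset Printing Implicit Defensive.
Import Order.TTheory GRing.Theory Num.Theory.
Local Open Scope ring_scope.

Section Plane.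
Variable R : rcfType.
Definition point := (R * R)%type.

Definition dist (p q : point) : R :=
  Num.sqrt ((p.1 - q.1) ^+ 2 + (p.2 - q.2) ^+ 2).

(* orientation: twice the signed area of triangle o a b *)
Definition orient (o a b : point) : R :=
  (a.1 - o.1) * (b.2 - o.2) - (a.2 - o.2) * (b.1 - o.1).

Definition convex_polygon (n : nat) (V : 'I_n -> point) : Prop :=
  (forall i j : 'I_n, j != i -> j != ordS i -> 0 < orient (V i) (V (ordS i)) (V j))
  \/
  (forall i j : 'I_n, j != i -> j != ordS i -> orient (V i) (V (ordS i)) (V j) < 0).

Definition inscribed (n : nat) (V : 'I_n -> point) (r : R) : Prop :=
  0 < r /\ exists c : point, forall i : 'I_n, dist (V i) c = r.

Definition polygon_area (n : nat) (V : 'I_n -> point) : R :=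
  `| \sum_(i < n) ((V i).1 * (V (ordS i)).2 - (V (ordS i)).1 * (V i).2) | / 2.
End Plane.

(* Main.v *)
Require Import Defs.
From mathcomp Require Import all_boot all_order all_algebra.
From mathcomp Require Import ring lra.
Import Order.TTheory GRing.Theory Num.Theory.
Local Open Scope ring_scope.

Section Aux.
Variable R : rcfType.
Implicit Types p q s c : point R.

Definition dd (p q : point R) : R := (p.1 - q.1) ^+ 2 + (p.2 - q.2) ^+ 2.
Definition dot (a o b : point R) : R := (a.1 - o.1) * (b.1 - o.1) + (a.2 - o.2) * (b.2 - o.2).

Lemma tri_id p q s c (rho : R) :
  dd p c = rho -> dd q c = rho -> dd s c = rho ->
  dd p q * dd q s * dd s p = 4 * rho * (orient p q s) ^+ 2.
Proof.
case: p => a1 b1; case: q => a2 b2; case: s => a3 b3; case: c => c1 c2.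
rewrite /dd /orient /= => h1 h2 h3.
apply/eqP; rewrite -subr_eq0; apply/eqP.
transitivity ((- 3*(b3-c2)^+2*rho + (b3-c2)^+4 + (a3-c1)^+2*rho + 2*(a3-c1)^+2*(b3-c2)^+2 + (a3-c1)^+4 + 6*(b2-c2)*(b3-c2)*rho - 2*(b2-c2)*(b3-c2)^+3 - 2*(b2-c2)*(a3-c1)^+2*(b3-c2) - 3*(b2-c2)^+2*rho + 2*(b2-c2)^+2*(b3-c2)^+2 + 2*(b2-c2)^+2*(a3-c1)^+2 - 2*(b2-c2)^+3*(b3-c2) + (b2-c2)^+4 - 2*(a2-c1)*(a3-c1)*rho + 2*(a2-c1)*(a3-c1)*(b3-c2)^+2 + 2*(a2-c1)*(a3-c1)^+3 - 8*(a2-c1)*(b2-c2)*(a3-c1)*(b3-c2) + 2*(a2-c1)*(b2-c2)^+2*(a3-c1) + (a2-c1)^+2*rho + 2*(a2-c1)^+2*(b3-c2)^+2 - 6*(a2-c1)^+2*(a3-c1)^+2 - 2*(a2-c1)^+2*(b2-c2)*(b3-c2) + 2*(a2-c1)^+2*(b2-c2)^+2 + 2*(a2-c1)^+3*(a3-c1) + (a2-c1)^+4 - 2*(b1-c2)*(b3-c2)^+3 - 2*(b1-c2)*(a3-c1)^+2*(b3-c2) + 2*(b1-c2)*(b2-c2)*(b3-c2)^+2 - 2*(b1-c2)*(b2-c2)*(a3-c1)^+2 + 2*(b1-c2)*(b2-c2)^+2*(b3-c2) - 2*(b1-c2)*(b2-c2)^+3 + 4*(b1-c2)*(a2-c1)*(a3-c1)*(b3-c2)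 + 4*(b1-c2)*(a2-c1)*(b2-c2)*(a3-c1) - 2*(b1-c2)*(a2-c1)^+2*(b3-c2) - 2*(b1-c2)*(a2-c1)^+2*(b2-c2) + (b1-c2)^+2*(b3-c2)^+2 + (b1-c2)^+2*(a3-c1)^+2 - 2*(b1-c2)^+2*(b2-c2)*(b3-c2) + (b1-c2)^+2*(b2-c2)^+2 - 2*(b1-c2)^+2*(a2-c1)*(a3-c1) + (b1-c2)^+2*(a2-c1)^+2 - 2*(a1-c1)*(a3-c1)*(b3-c2)^+2 - 2*(a1-c1)*(a3-c1)^+3 + 4*(a1-c1)*(b2-c2)*(a3-c1)*(b3-c2) - 2*(a1-c1)*(b2-c2)^+2*(a3-c1) - 2*(a1-c1)*(a2-c1)*(b3-c2)^+2 + 2*(a1-c1)*(a2-c1)*(a3-c1)^+2 + 4*(a1-c1)*(a2-c1)*(b2-c2)*(b3-c2) - 2*(a1-c1)*(a2-c1)*(b2-c2)^+2 + 2*(a1-c1)*(a2-c1)^+2*(a3-c1) - 2*(a1-c1)*(a2-c1)^+3 + (a1-c1)^+2*(b3-c2)^+2 + (a1-c1)^+2*(a3-c1)^+2 - 2*(a1-c1)^+2*(b2-c2)*(b3-c2) + (a1-c1)^+2*(b2-c2)^+2 - 2*(a1-c1)^+2*(a2-c1)*(a3-c1) + (a1-c1)^+2*(a2-c1)^+2)*((a1-c1)^+2+(b1-c2)^+2-rho) + (2*rho^+2 - (b3-c2)^+2*rho + (b3-c2)^+4 - 5*(a3-c1)^+2*rho + 2*(a3-c1)^+2*(b3-c2)^+2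 + (a3-c1)^+4 - 2*(b2-c2)*(b3-c2)*rho - 2*(b2-c2)*(b3-c2)^+3 - 2*(b2-c2)*(a3-c1)^+2*(b3-c2) + (b2-c2)^+2*rho + (b2-c2)^+2*(b3-c2)^+2 + (b2-c2)^+2*(a3-c1)^+2 + 2*(a2-c1)*(a3-c1)*rho - 2*(a2-c1)*(a3-c1)*(b3-c2)^+2 - 2*(a2-c1)*(a3-c1)^+3 + (a2-c1)^+2*rho + (a2-c1)^+2*(b3-c2)^+2 + (a2-c1)^+2*(a3-c1)^+2 + 4*(b1-c2)*(b3-c2)*rho - 2*(b1-c2)*(b3-c2)^+3 - 2*(b1-c2)*(a3-c1)^+2*(b3-c2) - 2*(b1-c2)*(b2-c2)*rho + 2*(b1-c2)*(b2-c2)*(b3-c2)^+2 - 2*(b1-c2)*(b2-c2)*(a3-c1)^+2 - 2*(b1-c2)*(b2-c2)^+2*(b3-c2) + 4*(b1-c2)*(a2-c1)*(a3-c1)*(b3-c2) - 2*(b1-c2)*(a2-c1)^+2*(b3-c2) - 4*(b1-c2)^+2*rho + 8*(b1-c2)^+2*(a3-c1)^+2 + 4*(b1-c2)^+2*(b2-c2)*(b3-c2) - 4*(b1-c2)^+2*(a2-c1)*(a3-c1) + 2*(a1-c1)*(a3-c1)*(b3-c2)^+2 + 2*(a1-c1)*(a3-c1)^+3 + 4*(a1-c1)*(b2-c2)*(a3-c1)*(b3-c2) - 2*(a1-c1)*(b2-c2)^+2*(a3-c1) - 2*(a1-c1)*(a2-c1)*rho - 2*(a1-c1)*(a2-c1)*(b3-c2)^+2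 + 2*(a1-c1)*(a2-c1)*(a3-c1)^+2 - 2*(a1-c1)*(a2-c1)^+2*(a3-c1) - 8*(a1-c1)*(b1-c2)*(a3-c1)*(b3-c2) + 4*(a1-c1)*(b1-c2)*(b2-c2)*(a3-c1) + 4*(a1-c1)*(b1-c2)*(a2-c1)*(b3-c2))*((a2-c1)^+2+(b2-c2)^+2-rho) + (- 2*rho^+2 + 2*(b3-c2)^+2*rho + 2*(a3-c1)^+2*rho - 4*(b2-c2)*(b3-c2)*rho + 4*(b2-c2)^+2*rho - 4*(b1-c2)*(b3-c2)*rho + 2*(b1-c2)*(b2-c2)*rho - 2*(b1-c2)*(b2-c2)*(b3-c2)^+2 - 2*(b1-c2)*(b2-c2)*(a3-c1)^+2 + 4*(b1-c2)*(b2-c2)^+2*(b3-c2) + 4*(b1-c2)*(a2-c1)*(b2-c2)*(a3-c1) + 4*(b1-c2)^+2*rho + 4*(b1-c2)^+2*(b2-c2)*(b3-c2) - 8*(b1-c2)^+2*(b2-c2)^+2 - 4*(b1-c2)^+2*(a2-c1)*(a3-c1) - 4*(a1-c1)*(b2-c2)^+2*(a3-c1) + 2*(a1-c1)*(a2-c1)*rho - 2*(a1-c1)*(a2-c1)*(b3-c2)^+2 - 2*(a1-c1)*(a2-c1)*(a3-c1)^+2 + 4*(a1-c1)*(a2-c1)*(b2-c2)*(b3-c2) + 4*(a1-c1)*(b1-c2)*(b2-c2)*(a3-c1) + 4*(a1-c1)*(b1-c2)*(a2-c1)*(b3-c2) - 8*(a1-c1)*(b1-c2)*(a2-c1)*(b2-c2))*((a3-c1)^+2+(b3-c2)^+2-rho));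 first ring.
by rewrite h1 h2 h3 !subrr !mulr0 !addr0.
Qed.

Lemma quad_id p q s t c (rho : R) :
  dd p c = rho -> dd q c = rho -> dd s c = rho -> dd t c = rho ->
  dot p t s * orient p q s + dot p q s * orient s t p = 0.
Proof.
case: p => a1 b1; case: q => a2 b2; case: s => a3 b3; case: t => a4 b4; case: c => c1 c2.
rewrite /dd /orient /dot /= => h1 h2 h3 h4.
transitivity (((b3-c2)*(a4-c1) - (a3-c1)*(b4-c2) - (b2-c2)*(a4-c1) + (b2-c2)*(a3-c1) + (a2-c1)*(b4-c2) - (a2-c1)*(b3-c2))*((a1-c1)^+2+(b1-c2)^+2-rho) + (- (b3-c2)*(a4-c1) + (a3-c1)*(b4-c2) + (b1-c2)*(a4-c1) - (b1-c2)*(a3-c1) - (a1-c1)*(b4-c2) + (a1-c1)*(b3-c2))*((a2-c1)^+2+(b2-c2)^+2-rho) + ((b2-c2)*(a4-c1) - (a2-c1)*(b4-c2) - (b1-c2)*(a4-c1) + (b1-c2)*(a2-c1) + (a1-c1)*(b4-c2) - (a1-c1)*(b2-c2))*((a3-c1)^+2+(b3-c2)^+2-rho) + (- (b2-c2)*(a3-c1) + (a2-c1)*(b3-c2) + (b1-c2)*(a3-c1) - (b1-c2)*(a2-c1) - (a1-c1)*(b3-c2) + (a1-c1)*(b2-c2))*((a4-c1)^+2+(b4-c2)^+2-rho)); first ring.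
by rewrite h1 h2 h3 h4 !subrr !mulr0 !addr0.
Qed.

Lemma dist_sq p q : dist p q ^+ 2 = dd p q.
Proof. by rewrite /dist sqr_sqrtr // addr_ge0 // sqr_ge0. Qed.

Lemma dist_ge0 p q : 0 <= dist p q.
Proof. exact: sqrtr_ge0. Qed.

Lemma distC p q : dist p q = dist q p.
Proof. by rewrite /dist; congr Num.sqrt; ring. Qed.

Lemma on_circ {p c : point R} {r : R} : dist p c = r -> dd p c = r ^+ 2.
Proof. by move=> <-; rewrite dist_sq. Qed.

Lemma tri_dist p q s c (r : R) : 0 < r -> dist p c = r -> dist q c = r -> dist s c = r ->
  dist p q * dist q s * dist s p = 2 * r * `|orient p q s|.
Proof.
move=> r0 hp hq hs; apply/eqP; rewrite -(@eqrXn2 _ 2) //; last first.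
- by rewrite mulr_ge0 // mulr_ge0 // ltW.
- by rewrite !mulr_ge0 ?dist_ge0.
rewrite !exprMn !dist_sq (@tri_id p q s c _ (on_circ hp) (on_circ hq) (on_circ hs)).
by rewrite real_normK ?num_real //; apply/eqP; ring.
Qed.
End Aux.
Arguments on_circ {R p c r}.
Arguments dd {R}. Arguments dot {R}. Arguments distC {R}.

Lemma shoelace5 (R : rcfType) (V : 'I_5 -> point R) :
  polygon_area V = `| orient (V (inord 1)) (V (inord 2)) (V (inord 3))
     + orient (V (inord 3)) (V (inord 4)) (V (inord 1))
     + orient (V (inord 4)) (V (inord 0)) (V (inord 1)) | / 2.
Proof.
rewrite /polygon_area; congr (`|_| / 2).
rewrite (eq_bigr (fun i : 'I_5 => let u := V (inord i) in let w := V (inord (i.+1 %% 5)) in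
   u.1 * w.2 - w.1 * u.2)); last first.
  move=> i _ /=; rewrite inord_val (_ : ordS i = inord (i.+1 %% 5)) //.
  by apply/val_inj; rewrite /= inordK // ltn_mod.
rewrite !big_ord_recl big_ord0 /=.
rewrite /orient; ring.
Qed.

Lemma ordS5 (k : nat) : (k < 5)%N -> ordS (inord k : 'I_5) = inord (k.+1 %% 5).
Proof. by move=> hk; apply/val_inj; rewrite /= !inordK // ltn_mod. Qed.

Lemma inord_neq (j k : nat) : (j < 5)%N -> (k < 5)%N -> j != k -> (inord j : 'I_5) != inord k.
Proof. by move=> hj hk hjk; apply/eqP => /(congr1 val); rewrite /= !inordK //; apply/eqP. Qed.


Theorem proposition4 (R : rcfType) (V : 'I_5 -> point R) (r A : R) :
  convex_polygon V -> inscribed V r -> A = polygon_area V ->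
  let a0 := dist (V (inord 2)) (V (inord 3)) in
  let a1 := dist (V (inord 3)) (V (inord 4)) in
  let a2 := dist (V (inord 4)) (V (inord 0)) in
  let a3 := dist (V (inord 0)) (V (inord 1)) in
  let a4 := dist (V (inord 1)) (V (inord 2)) in
  let X := dist (V (inord 1)) (V (inord 4)) in
  let p := a2 * a3 in
  let P := a0 * a1 * a4 in
  let Q := a0 ^+ 2 + a1 ^+ 2 + a4 ^+ 2 in
  let S := (a0 * a1) ^+ 2 + (a0 * a4) ^+ 2 + (a1 * a4) ^+ 2 in
  (4 * A * r - p * X) ^+ 2 = P * X ^+ 3 + S * X ^+ 2 + P * Q * X + P ^+ 2.
Proof.
move=> hconv [r0 [c hc]] -> a0 a1 a2 a3 a4 X p P Q S.
rewrite /p /P /Q /S /a0 /a1 /a2 /a3 /a4 /X {p P Q S a0 a1 a2 a3 a4 X}.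
rewrite shoelace5.
move: (hc (inord 0)) (hc (inord 1)) (hc (inord 2)) (hc (inord 3)) (hc (inord 4)).
have h13 := inord_neq 3 1 isT isT isT.
have h12 := inord_neq 3 2 isT isT isT.
have h31 := inord_neq 1 3 isT isT isT.
have h34 := inord_neq 1 4 isT isT isT.
have h41 := inord_neq 1 4 isT isT isT.
have h40 := inord_neq 1 0 isT isT isT.
have hS1 : ordS (inord 1 : 'I_5) = inord 2 := ordS5 1 isT.
have hS3 : ordS (inord 3 : 'I_5) = inord 4 := ordS5 3 isT.
have hS4 : ordS (inord 4 : 'I_5) = inord 0 := ordS5 4 isT.
have j1 : (inord 3 : 'I_5) != ordS (inord 1) by rewrite hS1.
have j2 : (inord 1 : 'I_5) != ordS (inord 3) by rewrite hS3.
have j3 : (inord 1 : 'I_5) != ordS (inord 4) by rewrite hS4.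
have [eps [heps [n1 [n2 [n3 [n4 o1]]]]]] : exists eps : R, (eps = 1 \/ eps = -1) /\
   `|orient (V (inord 1)) (V (inord 2)) (V (inord 3))| = eps * orient (V (inord 1)) (V (inord 2)) (V (inord 3)) /\
   `|orient (V (inord 3)) (V (inord 4)) (V (inord 1))| = eps * orient (V (inord 3)) (V (inord 4)) (V (inord 1)) /\
   `|orient (V (inord 4)) (V (inord 0)) (V (inord 1))| = eps * orient (V (inord 4)) (V (inord 0)) (V (inord 1)) /\
   `|orient (V (inord 1)) (V (inord 2)) (V (inord 3)) + orient (V (inord 3)) (V (inord 4)) (V (inord 1))
      + orient (V (inord 4)) (V (inord 0)) (V (inord 1))| =
     eps * (orient (V (inord 1)) (V (inord 2)) (V (inord 3)) + orient (V (inord 3)) (V (inord 4)) (V (inord 1))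
      + orient (V (inord 4)) (V (inord 0)) (V (inord 1))) /\
   orient (V (inord 1)) (V (inord 2)) (V (inord 3)) != 0.
  case: hconv => H.
  - have g1 := H (inord 1) (inord 3) h13 j1.
    have g2 := H (inord 3) (inord 1) h31 j2.
    have g3 := H (inord 4) (inord 1) h41 j3.
    rewrite hS1 in g1; rewrite hS3 in g2; rewrite hS4 in g3.
    exists 1; rewrite !mul1r (gtr0_norm g1) (gtr0_norm g2) (gtr0_norm g3) (gtr0_norm (addr_gt0 (addr_gt0 g1 g2) g3)); split; first by left.
    by rewrite gt_eqF.
  - have g1 := H (inord 1) (inord 3) h13 j1.
    have g2 := H (inord 3) (inord 1) h31 j2.
    have g3 := H (inord 4) (inord 1) h41 j3.
    rewrite hS1 in g1; rewrite hS3 in g2; rewrite hS4 in g3.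
    have g4 : (orient (V (inord 1)) (V (inord 2)) (V (inord 3)) + orient (V (inord 3)) (V (inord 4)) (V (inord 1)) + orient (V (inord 4)) (V (inord 0)) (V (inord 1))) < 0 by lra.
    exists (-1); rewrite !mulN1r (ltr0_norm g1) (ltr0_norm g2) (ltr0_norm g3) (ltr0_norm g4); split; first by right.
    by rewrite lt_eqF.
move=> c0 c1 c2 c3 c4.
move: n1 n2 n3 n4 o1 c0 c1 c2 c3 c4.
move: (V (inord 0)) (V (inord 1)) (V (inord 2)) (V (inord 3)) (V (inord 4)) => P0 P1 P2 P3 P4.
move=> n1 n2 n3 n4 o1 c0 c1 c2 c3 c4.
have T1 := @tri_dist _ P1 P2 P3 c r r0 c1 c2 c3.
have T2 := @tri_dist _ P3 P4 P1 c r r0 c3 c4 c1.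
have T3 := @tri_dist _ P4 P0 P1 c r r0 c4 c0 c1.
rewrite (distC P4 P1) (distC P1 P3) in T2.
have Qd := @quad_id _ P1 P2 P3 P4 c _ (on_circ c1) (on_circ c2) (on_circ c3) (on_circ c4).
have E2 : dist P3 P1 ^+ 2 - (dist P1 P2 ^+ 2 + dist P2 P3 ^+ 2 - 2 * dot P1 P2 P3) = 0.
  by rewrite !dist_sq /dd /dot; ring.
have E4 : dist P3 P1 ^+ 2 - (dist P3 P4 ^+ 2 + dist P1 P4 ^+ 2 - 2 * dot P1 P4 P3) = 0.
  by rewrite !dist_sq /dd /dot; ring.
have hk0 : dot P1 P4 P3 * (dist P1 P2 * dist P2 P3 * dist P3 P1)
         + dot P1 P2 P3 * (dist P3 P4 * dist P1 P4 * dist P3 P1) = 0.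
  rewrite T1 T2 n1 n2.
  transitivity (2 * r * eps * (dot P1 P4 P3 * orient P1 P2 P3 + dot P1 P2 P3 * orient P3 P4 P1)).
    by ring.
  by rewrite Qd; ring.
have enz : dist P3 P1 != 0.
  apply/eqP => e0; move: T1; rewrite e0 mulr0 => /esym /eqP.
  by rewrite mulf_eq0 normr_eq0 (negbTE o1) orbF mulf_eq0 (gt_eqF r0) orbF pnatr_eq0.
have hk : dot P1 P4 P3 * (dist P1 P2 * dist P2 P3) + dot P1 P2 P3 * (dist P3 P4 * dist P1 P4) = 0.
  apply: (mulIf enz); rewrite mul0r -hk0; ring.
have K : dist P3 P1 ^+ 2 * (dist P1 P2 * dist P2 P3 + dist P3 P4 * dist P1 P4) =
   dist P3 P4 * dist P1 P4 * (dist P1 P2 ^+ 2 + dist P2 P3 ^+ 2)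
   + dist P1 P2 * dist P2 P3 * (dist P3 P4 ^+ 2 + dist P1 P4 ^+ 2).
  apply/eqP; rewrite -subr_eq0; apply/eqP.
  transitivity (dist P1 P2 * dist P2 P3 * (dist P3 P1 ^+ 2 - (dist P3 P4 ^+ 2 + dist P1 P4 ^+ 2 - 2 * dot P1 P4 P3))
    + dist P3 P4 * dist P1 P4 * (dist P3 P1 ^+ 2 - (dist P1 P2 ^+ 2 + dist P2 P3 ^+ 2 - 2 * dot P1 P2 P3))
    - 2 * (dot P1 P4 P3 * (dist P1 P2 * dist P2 P3) + dot P1 P2 P3 * (dist P3 P4 * dist P1 P4))).
    by ring.
  by rewrite E2 E4 hk; ring.
have h4 : forall x : R, 4 * (x / 2) = 2 * x.
  by move=> x; field.
rewrite n4 h4.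
have F1 : 2 * (eps * (orient P1 P2 P3 + orient P3 P4 P1 + orient P4 P0 P1)) * r =
   2 * r * `|orient P1 P2 P3| + 2 * r * `|orient P3 P4 P1| + 2 * r * `|orient P4 P0 P1|.
  by rewrite n1 n2 n3; ring.
rewrite F1 -T1 -T2 -T3.
transitivity ((dist P1 P2 * dist P2 P3 + dist P3 P4 * dist P1 P4) *
   (dist P3 P1 ^+ 2 * (dist P1 P2 * dist P2 P3 + dist P3 P4 * dist P1 P4))).
  by ring.
rewrite K; ring.
Qed.
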